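(* Let $G$ be a strongly connected network on $\mathcal{V}$ with stationary distribution $\pi$. For all $i,j,m\in\mathcal{V}$: (1) $\boldsymbol{F}_{iij}=\pi_iC_{ij}$; (2) $\dfrac{\boldsymbol{F}_{imj}}{\pi_m}+\dfrac{\boldsymbol{F}_{mij}}{\pi_i}=C_{ij}+C_{jm}-C_{im}$; (3) $\dfrac{\boldsymbol{F}_{imj}}{\pi_m}+\dfrac{\boldsymbol{F}_{ijm}}{\pi_j}=C_{jm}$; (4) $\boldsymbol{F}_{imj}+\boldsymbol{F}_{jmi}=\pi_mC_{ij}$.
   Context: The random walk on $G$ has transition matrix $P=D^{-1}A$ for a nonnegative affinity matrix $A$; strongly connected means all nodes mutually reachable. For target $t$ and $\mathcal{T}=\mathcal{V}\setminus\{t\}$, $F^{\{t\}}=(I-P_{\mathcal{T}\mathcal{T}})^{-1}$, and the fundamental tensor is $\boldsymbol{F}_{smt}=F^{\{t\}}_{sm}$ if $s,m\neq t$ and $0$ otherwise (so $\boldsymbol{F}_{imj}=F^{\{j\}}_{im}$). $H_i^{\{j\}}$ is the expected number of steps for the walk started at $i$ to first hit $j$ ($0$ if $i=j$), and the commute time is $C_{ij}=H_i^{\{j\}}+H_j^{\{i\}}$. *)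

(* Defs.v *)
From mathcomp Require Import all_boot all_order all_algebra.
From mathcomp Require Import all_classical all_reals all_analysis.
Set Implicit Arguments. Unset Strict Implicit. Unset Printing Implicit Defensive.
Import Order.TTheory GRing.Theory Num.Theory.
Local Open Scope ring_scope.

Section RW.
Variables (R : realType) (n : nat).
Implicit Types (A : 'M[R]_n.+1).

Definition degmx A : 'M[R]_n.+1 := diag_mx (\row_i \sum_j A i j).

Definition transmx A : 'M[R]_n.+1 := invmx (degmx A) *m A.

Definition strongly_connected A : Prop :=
  forall i j : 'I_n.+1, connect (fun x y => 0 < A x y) i j.

Definition stationary A (pi : 'I_n.+1 -> R) : Prop :=
  (forall i, 0 <= pi i) /\ \sum_i pi i = 1 /\
  (forall j, \sum_i pi i * transmx A i j = pi j).

(* P restricted to T = V \ {t}; T is indexed by 'I_n via lift t *)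
Definition PTT A (t : 'I_n.+1) : 'M[R]_n :=
  \matrix_(a, b) transmx A (lift t a) (lift t b).

Definition Fmx A (t : 'I_n.+1) : 'M[R]_n := invmx (1%:M - PTT A t).

Definition Ften A (s m t : 'I_n.+1) : R :=
  match unlift t s, unlift t m with
  | Some s', Some m' => Fmx A t s' m'
  | _, _ => 0
  end.

(* Pr_i(first hitting time of t = k.+1), for the walk started at i <> t:
   sum over paths staying in T for k steps, then jumping to t *)
Definition first_hit_prob A (i t : 'I_n.+1) (k : nat) : R :=
  match unlift t i with
  | Some i' => \sum_(b < n) (PTT A t ^+ k) i' b * transmx A (lift t b) t
  | None => 0
  end.

Definition hitting_time A (i t : 'I_n.+1) : R :=
  if i == t then 0 else
  fine (\sum_(0 <= k <oo) ((k.+1)%:R * first_hit_prob A i t k)%:E)%E.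

Definition commute_time A (i j : 'I_n.+1) : R :=
  hitting_time A i j + hitting_time A j i.

End RW.

(* Main.v *)
Require Import Defs.
From mathcomp Require Import all_boot all_order all_algebra.
From mathcomp Require Import all_classical all_reals all_analysis.
From mathcomp Require Import zify ring lra.
Import Order.TTheory GRing.Theory Num.Theory numFieldNormedType.Exports.
Local Open Scope ring_scope.

Lemma mono_seq (R : realType) (u : nat -> R) :
  (forall m, u m.+1 <= u m) -> forall m k, (m <= k)%N -> u k <= u m.
Proof.
move=> ud m k /subnKC <-; elim: (k - m)%N => [|d IH]; first by rewrite addn0.
by rewrite addnS (le_trans (ud _)).
Qed.

Lemma decay (R : realType) (u : nat -> R) (L : nat) (c : R) :
  (0 < L)%N -> 0 <= c -> c < 1 -> (forall m, 0 <= u m) ->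
  (forall m, u m.+1 <= u m) -> (forall m, u (m + L)%N <= c * u m) ->
  forall e, 0 < e -> exists N0, forall N, (N0 <= N)%N -> N%:R * u N <= e.
Proof.
move=> L0 c0 c1 u0 ud uL e e0.
pose q : R := 2^-1.
have q0 : 0 <= q by rewrite invr_ge0 ler0n.
have [p [p0 cp]] : exists p, (0 < p)%N /\ c ^+ p <= q ^+ 2.
  have := @cvg_expr R c; rewrite ger0_norm // => /(_ c1).
  move=> /cvgrPdist_le /(_ (q ^+ 2)) [|p1 _ Hp].
    by rewrite exprn_gt0 // invr_gt0 ltr0n.
  exists p1.+1; split => //; have := Hp p1.+1 (leqnSn _).
  by rewrite /= sub0r normrN ger0_norm ?exprn_ge0.
pose K := (p * L)%N.
have K0 : (0 < K)%N by rewrite muln_gt0 p0 L0.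
have uk : forall k m, u (m + k * L)%N <= c ^+ k * u m.
  elim => [|k IH] m; first by rewrite mul0n addn0 expr0 mul1r.
  rewrite mulSnr addnA; apply: (le_trans (uL _)).
  by rewrite exprS -mulrA ler_wpM2l.
have uK : forall m, u (m + K)%N <= q ^+ 2 * u m.
  by move=> m; apply: (le_trans (uk p m)); rewrite ler_wpM2r.
have uj : forall j, u (j * K)%N <= q ^+ j * q ^+ j * u 0%N.
  elim => [|j IH]; first by rewrite mul0n expr0 !mul1r.
  rewrite mulSnr; apply: (le_trans (uK _)).
  have -> : q ^+ j.+1 * q ^+ j.+1 * u 0%N = q ^+ 2 * (q ^+ j * q ^+ j * u 0%N).
    by rewrite !exprS expr0; ring.
  by rewrite ler_wpM2l // exprn_ge0.
have key : forall N, N%:R * u N <= K%:R * u 0%N * q ^+ (N %/ K).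
  move=> N; set j := (N %/ K)%N.
  have NK : (N < j.+1 * K)%N by rewrite -ltn_divLR.
  have uN : u N <= u (j * K)%N by apply: mono_seq => //; rewrite leq_trunc_div.
  apply: (@le_trans _ _ ((j.+1 * K)%:R * (q ^+ j * q ^+ j * u 0%N))).
    apply: ler_pM => //; first by rewrite ler_nat ltnW.
    exact: le_trans uN (uj j).
  have jq : j.+1%:R * q ^+ j <= 1.
    have E : (2 : R) ^+ j * q ^+ j = 1 by rewrite -exprMn mulfV // expr1n.
    rewrite -[leRHS]E ler_wpM2r ?exprn_ge0 // -natrX ler_nat.
    exact: ltn_expl.
  have -> : (j.+1 * K)%:R * (q ^+ j * q ^+ j * u 0%N) =
            (j.+1%:R * q ^+ j) * (K%:R * u 0%N * q ^+ j) by rewrite natrM; ring.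
  by rewrite ler_piMl // mulr_ge0 ?exprn_ge0 // mulr_ge0.
have := @cvg_geometric R (K%:R * u 0%N) q; rewrite ger0_norm // => /(_ _).
move=> /(_ _) /cvgrPdist_le /(_ e e0) [|j0 _ Hj].
  by rewrite invf_lt1 // ltr1n.
exists (j0 * K)%N => N HN; apply: (le_trans (key N)).
have := Hj (N %/ K)%N; rewrite /= sub0r normrN => /(_ _) H.
apply: le_trans (ler_norm _) (H _).
by rewrite leq_divRL.
Qed.

Lemma fin_max_lt1 (R : realType) (T : finType) (f : T -> R) :
  (forall a, f a < 1) -> exists c, [/\ 0 <= c, c < 1 & forall a, f a <= c].
Proof.
move=> H.
have : forall s : seq T, exists c, [/\ 0 <= c, c < 1 & forall a, a \in s -> f a <= c].
  elim => [|x s [c [c0 c1 Hc]]]; first by exists 0; split => //.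
  exists (Num.max (f x) c); split.
  - by rewrite le_max c0 orbT.
  - by rewrite gt_max H c1.
  - move=> a; rewrite in_cons => /orP [/eqP ->|/Hc]; first by rewrite le_max lexx.
    by move=> h; rewrite le_max h orbT.
move/(_ (enum T)) => [c [c0 c1 Hc]]; exists c; split => // a.
by apply: Hc; rewrite mem_enum.
Qed.

Section Basics.
Variables (R : realType) (n : nat) (A : 'M[R]_n.+1).
Hypothesis A0 : forall i j, 0 <= A i j.
Hypothesis SC : strongly_connected A.

Definition dg (x : 'I_n.+1) := \sum_j A x j.

Lemma connect_closed_set (S : pred 'I_n.+1) x y :
  (forall u v, S u -> 0 < A u v -> S v) -> S x ->
  connect (fun u v => 0 < A u v) x y -> S y.
Proof.
move=> cl Sx /connectP [p]; elim: p x Sx => [|z p IH] x Sx /=; first by move=> _ ->.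
by case/andP => xz pz; apply: IH pz; exact: cl xz.
Qed.

Lemma dg_gt0 (x y : 'I_n.+1) : x != y -> forall z, 0 < dg z.
Proof.
move=> xy z.
have [w zw] : exists w, z != w.
  by case: (eqVneq z x) => [->|]; [exists y|exists x].
move: (SC z w) => /connectP [[|u p] /=]; first by move=> _ E; rewrite E eqxx in zw.
case/andP => zu _ _.
rewrite /dg (bigD1 u) //=; apply: (lt_le_trans zu); rewrite lerDl.
by apply: sumr_ge0 => *; exact: A0.
Qed.

Hypothesis Hd : forall z, 0 < dg z.

Lemma P_entry x y : transmx A x y = A x y / dg x.
Proof.
rewrite /transmx.
have DE : degmx A *m diag_mx (\row_i (dg i)^-1) = 1%:M.
  rewrite /degmx mulmx_diag -diag_const_mx; congr diag_mx; apply/rowP => k.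
  by rewrite !mxE mulfV // lt0r_neq0 // Hd.
have [Du _] := mulmx1_unit DE.
have -> : invmx (degmx A) = diag_mx (\row_i (dg i)^-1).
  by rewrite -[RHS](mulKmx Du) DE mulmx1.
by rewrite mul_diag_mx !mxE mulrC.
Qed.

Lemma P_ge0 x y : 0 <= transmx A x y.
Proof. by rewrite P_entry divr_ge0 // ltW. Qed.

Lemma P_gt0 x y : (0 < transmx A x y) = (0 < A x y).
Proof. by rewrite P_entry pmulr_lgt0 // invr_gt0. Qed.

Lemma P_row1 x : \sum_y transmx A x y = 1.
Proof.
under eq_bigr do rewrite P_entry.
by rewrite -mulr_suml mulfV // lt0r_neq0 // Hd.
Qed.

Lemma pi_gt0 pi : stationary A pi -> forall i, 0 < pi i.
Proof.
move=> [p0 [p1 ps]] i.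
have [k pk] : exists k, 0 < pi k.
  case: (pickP (fun k => 0 < pi k)) => [k pk|H]; first by exists k.
  move: p1; rewrite big1 => [/eqP|k _]; first by rewrite eq_sym oner_eq0.
  by move: (p0 k); rewrite le0r H orbF => /eqP.
apply: (@connect_closed_set (fun v => 0 < pi v) k i) => // u v pu Auv.
rewrite -ps (bigD1 u) //=; apply: (@lt_le_trans _ _ (pi u * transmx A u v)).
  by rewrite mulr_gt0 // P_gt0.
by rewrite lerDl; apply: sumr_ge0 => *; rewrite mulr_ge0 // P_ge0.
Qed.


Variable t : 'I_n.+1.
Notation Q := (PTT A t).

Lemma Q_entry a b : Q a b = transmx A (lift t a) (lift t b).
Proof. by rewrite mxE. Qed.


Lemma Q_row a : \sum_b Q a b = 1 - transmx A (lift t a) t.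
Proof.
rewrite -(P_row1 (lift t a)) (bigD1_ord t) //= addrC addrK.
by apply: eq_bigr => b _; rewrite mxE.
Qed.

Lemma Q_ge0 a b : 0 <= Q a b.
Proof. by rewrite mxE P_ge0. Qed.

Lemma Qk_ge0 k a b : 0 <= (Q ^+ k) a b.
Proof.
elim: k a b => [|k IH] a b; first by rewrite expr0 mxE ler0n.
by rewrite exprS -mulmxE mxE; apply: sumr_ge0 => c _; rewrite mulr_ge0 // Q_ge0.
Qed.

Definition r k a := \sum_b (Q ^+ k) a b.

Lemma r_add m k a : r (m + k) a = \sum_b (Q ^+ m) a b * r k b.
Proof.
rewrite /r exprD -mulmxE.
under eq_bigr do rewrite mxE.
rewrite exchange_big /=; apply: eq_bigr => b _; by rewrite mulr_sumr.
Qed.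

Lemma r0 a : r 0 a = 1.
Proof.
rewrite /r expr0 (bigD1 a) //= mxE eqxx big1 ?addr0 // => b /negbTE ba.
by rewrite mxE eq_sym ba.
Qed.

Lemma r1 a : r 1 a = 1 - transmx A (lift t a) t.
Proof. by rewrite /r expr1 Q_row. Qed.

Lemma r_ge0 k a : 0 <= r k a.
Proof. by apply: sumr_ge0 => b _; exact: Qk_ge0. Qed.

Lemma r_le1 k a : r k a <= 1.
Proof.
elim: k a => [|k IH] a; first by rewrite r0.
rewrite -add1n r_add expr1; apply: (@le_trans _ _ (\sum_b Q a b)).
  by apply: ler_sum => b _; rewrite ler_piMr // Q_ge0.
by rewrite Q_row lerBlDr lerDl P_ge0.
Qed.

Lemma r_dec m a : r m.+1 a <= r m a.
Proof.
rewrite -addn1 r_add /r; apply: ler_sum => b _.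
by rewrite ler_piMr // ?Qk_ge0 // -/(r 1 b) r_le1.
Qed.

Lemma r_decn m k a : (m <= k)%N -> r k a <= r m a.
Proof.
move=> /subnKC <-; elim: (k - m)%N => [|d IH]; first by rewrite addn0.
by rewrite addnS (le_trans (r_dec _ _)).
Qed.


Lemma Zstep k a : r k.+1 a = 1 ->
  transmx A (lift t a) t = 0 /\ forall b, 0 < Q a b -> r k b = 1.
Proof.
move=> E.
have S : \sum_b Q a b * (1 - r k b) = - transmx A (lift t a) t.
  under eq_bigr do rewrite mulrBr mulr1.
  by rewrite sumrB Q_row -/(r _ _) -E -add1n r_add expr1 addrC addKr.
have S0 : 0 <= \sum_b Q a b * (1 - r k b).
  by apply: sumr_ge0 => b _; rewrite mulr_ge0 ?Q_ge0 // subr_ge0 r_le1.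
have Pt : transmx A (lift t a) t = 0.
  by apply/eqP; rewrite eq_le P_ge0 andbT -oppr_ge0 -S.
split => // b Qb.
have S' : \sum_b Q a b * (1 - r k b) = 0 by rewrite S Pt oppr0.
have H0 : forall c, 0 <= Q a c * (1 - r k c).
  by move=> c; rewrite mulr_ge0 ?Q_ge0 // subr_ge0 r_le1.
have := @psumr_eq0P _ _ predT (fun c => Q a c * (1 - r k c)) (fun c _ => H0 c) S' b isT.
move/eqP; by rewrite mulf_eq0 (gt_eqF Qb) /= subr_eq0 => /eqP <-.
Qed.

Definition Zk k := [set a | r k a == 1].

Lemma Zk_sub k : Zk k.+1 \subset Zk k.
Proof.
apply/fintype.subsetP => a; rewrite !inE => /eqP E.
by rewrite eq_le r_le1 /= -{1}E r_dec.
Qed.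

Lemma no_fixed k : Zk k.+1 = Zk k -> Zk k = finset.set0.
Proof.
move=> E; apply/finset.setP => a; rewrite !inE; apply/negP => aZ.
pose S := fun x => if unlift t x is Some b then b \in Zk k else false.
have St : S t.
  apply: (@connect_closed_set S (lift t a) t _ _ (SC _ _)); last by rewrite /S liftK inE.
  move=> u v; rewrite /S; case: unliftP => [b ->|->]; last by [].
  rewrite -E inE => /eqP /Zstep [Pt Qb].
  rewrite -P_gt0; case: unliftP => [c ->|->]; last by rewrite Pt ltxx.
  by rewrite -Q_entry E inE => /Qb ->.
by move: St; rewrite /S unlift_none.
Qed.

Lemma Zk_card k : (#|Zk k| <= n - k)%N.
Proof.
elim: k => [|k IH]; first by rewrite subn0 (leq_trans (max_card _)) ?card_ord.
case: (eqVneq (Zk k.+1) (Zk k)) => [E|NE].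
  by rewrite E no_fixed // cards0.
have : Zk k.+1 \proper Zk k by rewrite finset.properEneq NE Zk_sub.
move/proper_card => H; lia.
Qed.

Lemma r_lt1 a : r n a < 1.
Proof.
have : Zk n = finset.set0.
  by apply/eqP; rewrite -cards_eq0 -leqn0 -(subnn n) Zk_card.
move/finset.setP/(_ a); rewrite !inE => H.
by rewrite lt_neqAle H r_le1.
Qed.

Section WithC.
Variables (c : R) (c0 : 0 <= c) (c1 : c < 1) (Hc : forall a, r n a <= c).

Lemma M_unit : (1%:M - Q) \in unitmx.
Proof.
rewrite unitmxE unitfE; apply/negP => /det0P [u u0 uM].
have uQ : u = u *m Q by apply/eqP; rewrite -subr_eq0 -{1}[u]mulmx1 -mulmxBr uM.
have uQn : forall k, u = u *m Q ^+ k.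
  elim => [|k IH]; first by rewrite expr0 mulmx1.
  by rewrite exprSr -mulmxE mulmxA -IH.
pose N := \sum_b `|u 0 b|.
have N0 : 0 <= N by apply: sumr_ge0 => *.
have NcN : N <= c * N.
  rewrite {1}/N (uQn n).
  apply: (@le_trans _ _ (\sum_b \sum_a `|u 0 a| * (Q ^+ n) a b)).
    apply: ler_sum => b _; rewrite mxE; apply: (le_trans (ler_norm_sum _ _ _)).
    by apply: ler_sum => a _; rewrite normrM (ger0_norm (Qk_ge0 _ _ _)).
  rewrite exchange_big /= /N mulr_sumr; apply: ler_sum => a _.
  by rewrite -mulr_sumr -/(r n a) mulrC ler_wpM2r.
have N00 : N = 0.
  apply/eqP; rewrite eq_le N0 andbT.
  have : (1 - c) * N <= 0 by rewrite mulrBl mul1r subr_le0.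
  by rewrite pmulr_rle0 // subr_gt0.
move/negP: u0; apply; apply/eqP/rowP => b; rewrite mxE.
apply/normr0_eq0.
exact: (@psumr_eq0P _ _ predT (fun b => `|u 0 b|) (fun _ _ => normr_ge0 _) N00 b isT).
Qed.

Section WithV.
Variable v : 'cV[R]_n.
Hypothesis Mv : (1%:M - Q) *m v = const_mx 1.

Lemma v_eq a : v a 0 = 1 + \sum_b Q a b * v b 0.
Proof.
have := congr1 (fun X : 'cV[R]_n => X a 0) Mv.
rewrite mulmxBl mul1mx /= !mxE => <-.
by rewrite subrK.
Qed.

Definition w a k := \sum_b (Q ^+ k) a b * v b 0.

Lemma r_w a k : r k a = w a k - w a k.+1.
Proof.
have E : Q ^+ k *m const_mx 1 = Q ^+ k *m v - Q ^+ k.+1 *m v.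
  rewrite -Mv mulmxA mulmxBr mulmx1.
  by rewrite mulmxE -exprSr -mulmxBl.
have := congr1 (fun X : 'cV[R]_n => X a 0) E; rewrite /= !mxE => E'.
rewrite /r /w -E'; apply: eq_bigr => b _; by rewrite mxE mulr1.
Qed.

Lemma w0 a : w a 0 = v a 0.
Proof.
rewrite /w expr0 (bigD1 a) //= mxE eqxx mul1r big1 ?addr0 // => b /negbTE ba.
by rewrite mxE eq_sym ba mul0r.
Qed.

Lemma fhp k a : first_hit_prob A (lift t a) t k = r k a - r k.+1 a.
Proof.
rewrite /first_hit_prob liftK.
have Pt : forall b, transmx A (lift t b) t = 1 - r 1 b by move=> b; rewrite r1; ring.
under eq_bigr do rewrite Pt mulrBr mulr1.
by rewrite sumrB -[k.+1]addn1 r_add.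
Qed.

Lemma S_eq N a : \sum_(0 <= k < N) (k.+1%:R * first_hit_prob A (lift t a) t k)
  = v a 0 - w a N - N%:R * r N a.
Proof.
have -> : v a 0 - w a N = \sum_(0 <= k < N) r k a.
  rewrite (@telescope_sumr_eq _ 0 N (fun k => - w a k) (fun k => r k a)) //.
    by rewrite -w0 opprK addrC.
  by move=> k _; rewrite r_w opprK addrC.
elim: N => [|N IH]; first by rewrite !big_geq // mul0r subr0.
rewrite !big_nat_recr //= IH fhp -[N.+1]addn1 natrD; ring.
Qed.

Lemma w_bound a N : `|w a N| <= r N a * \sum_b `|v b 0|.
Proof.
rewrite /w /r mulr_suml; apply: (le_trans (ler_norm_sum _ _ _)).
apply: ler_sum => b _; rewrite normrM (ger0_norm (Qk_ge0 _ _ _)) ler_wpM2l ?Qk_ge0 //.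
by rewrite (bigD1 b) //= lerDl sumr_ge0.
Qed.

Local Open Scope classical_set_scope.
Lemma hit_eq a : hitting_time A (lift t a) t = v a 0.
Proof.
set g := fun k => k.+1%:R * first_hit_prob A (lift t a) t k.
have Hcvg : (fun N => \sum_(0 <= k < N) g k) @ \oo --> v a 0.
  apply/cvgrPdist_le => eps eps0.
  pose V := \sum_b `|v b 0|.
  have V0 : 0 <= V by apply: sumr_ge0 => *.
  have n0 : (0 < n)%N by apply: leq_ltn_trans (leq0n a) (ltn_ord a).
  have uL : forall m, r (m + n) a <= c * r m a.
    move=> m; rewrite r_add; apply: (@le_trans _ _ (\sum_b (Q ^+ m) a b * c)).
      by apply: ler_sum => b _; rewrite ler_wpM2l ?Qk_ge0.
    by rewrite -mulr_suml mulrC.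
  have e0 : 0 < eps / (V + 1) by rewrite divr_gt0 // ltr_wpDl.
  have [N0 HN0] := @decay R (fun N => r N a) n c n0 c0 c1 (fun m => r_ge0 m a)
    (fun m => r_dec m a) uL (eps / (V + 1)) e0.
  exists N0.+1 => // N /= HN; rewrite /g S_eq.
  have -> : v a 0 - (v a 0 - w a N - N%:R * r N a) = w a N + N%:R * r N a by ring.
  apply: (le_trans (ler_normD _ _)).
  have N1 : 1 <= N%:R :> R by rewrite ler1n; apply: leq_ltn_trans HN.
  have := HN0 N (ltnW HN); rewrite ler_pdivlMr ?ltr_wpDl // => H.
  apply: le_trans H; rewrite mulrDr mulr1 lerD //.
    apply: (le_trans (w_bound _ _)); rewrite -/V [N%:R * _]mulrC -mulrA ler_wpM2l ?r_ge0 // ler_peMl.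

  all: try done. by rewrite ger0_norm // mulr_ge0 ?r_ge0.
rewrite /hitting_time eq_sym (negbTE (neq_lift _ _)).
have -> : (fun n => (\sum_(0 <= k < n) (g k)%:E)%E) = EFin \o (fun N => \sum_(0 <= k < N) g k).
  by apply: funext => N /=; rewrite sumEFin.
by rewrite EFin_lim ?(cvg_lim _ Hcvg) //; apply/cvg_ex; exists (v a 0).
Qed.

End WithV.
End WithC.

Lemma M_unit' : (1%:M - Q) \in unitmx.
Proof.
have [c [c0 c1 Hc]] := @fin_max_lt1 _ _ _ r_lt1.
exact: (@M_unit c c1 Hc).
Qed.

Lemma hit_tt : hitting_time A t t = 0.
Proof. by rewrite /hitting_time eqxx. Qed.

Lemma hit_rec x : x != t ->
  hitting_time A x t = 1 + \sum_y transmx A x y * hitting_time A y t.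
Proof.
have [c [c0 c1 Hc]] := @fin_max_lt1 _ _ _ r_lt1.
have Mv : (1%:M - Q) *m (invmx (1%:M - Q) *m (const_mx 1 : 'cV[R]_n)) = const_mx 1.
  by rewrite mulKVmx // M_unit'.
move: (invmx _ *m _) Mv => v Mv.
move=> xt; rewrite eq_sym in xt; case: (unlift_some xt) => a -> _.
rewrite (@hit_eq c c0 c1 Hc v Mv) (@v_eq v Mv) (bigD1_ord t) //= hit_tt mulr0 add0r.
congr (1 + _); apply: eq_bigr => b _.
by rewrite mxE (@hit_eq c c0 c1 Hc v Mv).
Qed.


End Basics.

Section Key.
Variables (R : realType) (n : nat) (A : 'M[R]_n.+1) (pi : 'I_n.+1 -> R).
Hypotheses (A0 : forall i j, 0 <= A i j) (SC : strongly_connected A)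
  (Hd : forall z, 0 < dg R n A z) (St : stationary A pi).
Local Notation P := (transmx A).
Local Notation h t x := (hitting_time A x t).

Lemma kac t : pi t * (\sum_y P t y * h t y) = 1 - pi t.
Proof.
have [p0 [p1 ps]] := St.
have E : \sum_x pi x * (h t x - \sum_y P x y * h t y) = 0.
  under eq_bigr do rewrite mulrBr.
  rewrite sumrB; apply/eqP; rewrite subr_eq0; apply/eqP.
  under [RHS]eq_bigr do rewrite mulr_sumr.
  rewrite exchange_big /=; apply: eq_bigr => y _.
  by rewrite -ps mulr_suml; apply: eq_bigr => x _; rewrite mulrA.
move: E; rewrite (bigD1 t) //= hit_tt sub0r.
rewrite [X in _ + X = _](eq_bigr (fun x => pi x)); last first.
  by move=> x xt; rewrite (@hit_rec R n A A0 SC Hd _ _ xt) addrK mulr1.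
have -> : \sum_(x | x != t) pi x = 1 - pi t by rewrite -p1 [in RHS](bigD1 t) //= addrC addrK.
rewrite mulrN => E; lra.
Qed.

Lemma key i m j : Ften A i m j = pi m * (h j i + h m j - h m i).
Proof.
rewrite /Ften; case: unliftP => [i' Ei|->] /=; last by rewrite hit_tt add0r subrr mulr0.
case: unliftP => [m' Em|->] /=; last by rewrite hit_tt addr0 subrr mulr0.
pose g x := pi m * (h j x - h m x + h m j).
have gj : g j = 0 by rewrite /g hit_tt sub0r addNr mulr0.
have step : forall x, x != j -> g x - \sum_y P x y * g y = (x == m)%:R.
  move=> x xj.
  have Sg : \sum_y P x y * g y = pi m * (\sum_y P x y * h j y)
      - pi m * (\sum_y P x y * h m y) + pi m * h m j * (\sum_y P x y).
    rewrite !mulr_sumr -sumrB -big_split /=; apply: eq_bigr => y _; rewrite /g; ring.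
  rewrite Sg P_row1 // mulr1 /g (@hit_rec R n A A0 SC Hd _ _ xj).
  case: (eqVneq x m) => [->|xm].
    by rewrite hit_tt kac /=; ring.
  by rewrite (@hit_rec R n A A0 SC Hd _ _ xm) /=; ring.
pose M := 1%:M - PTT A j.
pose wv : 'cV[R]_n := \col_a g (lift j a).
have Mw : M *m wv = \col_a ((a == m')%:R).
  apply/colP => a; rewrite /M mulmxBl mul1mx !mxE.
  rewrite -(inj_eq (@lift_inj _ j)) -Em -step; last by rewrite eq_sym neq_lift.
  congr (_ - _); rewrite (bigD1_ord j) //= gj mulr0 add0r.
  by apply: eq_bigr => b _; rewrite !mxE.
have : wv = invmx M *m \col_a ((a == m')%:R) by rewrite -Mw mulKmx // (@M_unit' R n A A0 SC Hd).
move/(congr1 (fun X : 'cV[R]_n => X i' 0)); rewrite !mxE => E.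
rewrite /Fmx -/M.
have -> : invmx M i' m' = g (lift j i').
  rewrite E (bigD1 m') //= !mxE eqxx mulr1 big1 ?addr0 // => b /negbTE bm.
  by rewrite !mxE bm mulr0.
by rewrite /g -Ei; ring.
Qed.

End Key.



Theorem mainTheorem10 (R : realType) (n : nat) (A : 'M[R]_n.+1)
    (pi : 'I_n.+1 -> R) :
  (forall i j, 0 <= A i j) ->
  strongly_connected A ->
  stationary A pi ->
  forall i j m : 'I_n.+1,
    [/\ Ften A i i j = pi i * commute_time A i j,
        Ften A i m j / pi m + Ften A m i j / pi i =
          commute_time A i j + commute_time A j m - commute_time A i m,
        Ften A i m j / pi m + Ften A i j m / pi j = commute_time A j m
      & Ften A i m j + Ften A j m i = pi m * commute_time A i j].
Proof.
case: n A pi => [|n] A pi A0 SC St i j m.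
  rewrite (ord1 i) (ord1 j) (ord1 m).
  have F0 : Ften A ord0 ord0 ord0 = 0 by rewrite /Ften unlift_none.
  rewrite F0 /commute_time hit_tt !(mul0r, addr0, mulr0, subrr).
  by split.
have Hd := @dg_gt0 R n.+1 A A0 SC ord0 (lift ord0 ord0) (neq_lift _ _).
have pp := @pi_gt0 R n.+1 A A0 SC Hd pi St.
have pn : forall x, pi x != 0 by move=> x; rewrite lt0r_neq0 ?pp.
rewrite /commute_time !(@key R n.+1 A pi A0 SC Hd St) !hit_tt.
split.
- ring.
- by field; rewrite !pn.
- by field; rewrite !pn.
- ring.
Qed.
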